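(* Let $k>t+1$, $n>2k-t$, and let $\mathcal{S}_a$ be a maximal set of $k$-spaces in $\mathrm{AG}(n,q)$ pairwise intersecting in at least a $t$-space. Let $\psi(\mathcal{S}_a)=\min\{\dim T: T\text{ an affine subspace},\ \dim(T\cap\alpha)\geq t\ \forall\alpha\in\mathcal{S}_a\}$. If $\psi(\mathcal{S}_a)=t+x$ with $x\geq 2$, then \[|\mathcal{S}_a|\leq q^x\left[{t+x\atop x}\right]_q(\theta_{k-t})^x\left[{n-t-x\atop k-t-x}\right]_q.\]
   Context: Affine subspaces intersect in at least a $t$-space if their affine intersection has dimension at least $t$. $\left[{n\atop k}\right]_q=\frac{(q^n-1)\cdots(q^{n-k+1}-1)}{(q^k-1)\cdots(q-1)}$ for $k>0$, $=1$ for $k=0$; $\theta_m=\frac{q^{m+1}-1}{q-1}$. Maximal means no further affine $k$-space can be added keeping the property. *)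

(* Defs.v *)
(* AG(n,q) is modelled as the row space 'rV[F]_n over a
   finite field F with q = #|F| elements. *)
From HB Require Import structures.
From mathcomp Require Import all_boot all_order all_algebra.
Set Implicit Arguments. Unset Strict Implicit. Unset Printing Implicit Defensive.
Import Order.TTheory GRing.Theory Num.Theory.

Local Open Scope ring_scope.

Definition affine_space (F : finFieldType) (n k : nat) (A : {set 'rV[F]_n}) : Prop :=
  exists (v : 'rV[F]_n) (W : {vspace 'rV[F]_n}),
    \dim W = k /\ A = [set x | x - v \in W].

Definition meets_in (F : finFieldType) (n t : nat) (A B : {set 'rV[F]_n}) : Prop :=
  exists C : {set 'rV[F]_n}, affine_space t C /\ C \subset A /\ C \subset B.

Definition t_intersecting (F : finFieldType) (n k t : nat)
  (S : {set {set 'rV[F]_n}}) : Prop :=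
  (forall A, A \in S -> affine_space k A) /\
  (forall A B, A \in S -> B \in S -> A != B -> meets_in t A B).

Definition maximal_t_intersecting (F : finFieldType) (n k t : nat)
  (S : {set {set 'rV[F]_n}}) : Prop :=
  t_intersecting k t S /\
  (forall B, affine_space k B -> B \notin S -> exists2 A, A \in S & ~ meets_in t A B).

Definition covers (F : finFieldType) (n t : nat) (T : {set 'rV[F]_n})
  (S : {set {set 'rV[F]_n}}) : Prop :=
  forall A, A \in S -> meets_in t T A.

Definition qbinom (q n k : nat) : rat :=
  \prod_(i < k) (((q ^ (n - i))%:R - 1) / ((q ^ i.+1)%:R - 1)).

Definition theta (q m : nat) : rat := ((q ^ m.+1)%:R - 1) / (q%:R - 1).

(* Main.v *)
Require Import Defs.
From HB Require Import structures.
From mathcomp Require Import all_boot all_order all_algebra.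
From mathcomp Require Import finfield.
From mathcomp Require Import ring lra zify.
From Stdlib Require Import Classical.
Import Order.TTheory GRing.Theory Num.Theory.
Import VectorInternalTheory.
Local Open Scope ring_scope.

Set Implicit Arguments. Unset Strict Implicit.

HB.instance Definition _ (F : finFieldType) (vT : vectType F) :=
  [Finite of {vspace vT} by <:].


Section Count.
Variables (F : finFieldType) (m : nat).
Local Notation vT := 'rV[F]_m.
Local Notation q := #|F|.

Definition ft (Z : {vspace vT}) d :=
  [set s : d.-tuple vT | free s && all (fun v => v \in Z) s].

Definition Vs (Z : {vspace vT}) d (s : d.-tuple vT) :=
  [set v : vT | (v \in Z) && (v \notin <<s>>%VS)].

Lemma card_Vs Z d (s : d.-tuple vT) : s \in ft Z d ->
  #|Vs Z s| = (q ^ \dim Z - q ^ d)%N.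
Proof.
rewrite inE => /andP[fs /allP sZ].
have sub : (<<s>> <= Z)%VS by apply/span_subvP.
have ds : \dim <<s>> = d by move: fs; rewrite /free size_tuple => /eqP.
have -> : Vs Z s = [set v | v \in Z] :\: [set v | v \in <<s>>%VS].
  by apply/setP=> v; rewrite !inE andbC.
rewrite cardsD.
have -> : [set v | v \in Z] :&: [set v | v \in <<s>>%VS] = [set v | v \in <<s>>%VS].
  by apply/setP=> v; rewrite !inE andb_idl // => /(subvP sub).
rewrite !cardsE !card_vspace ds //.
Qed.

Lemma card_ft Z d : (d <= \dim Z)%N ->
  #|ft Z d| = (\prod_(i < d) (q ^ \dim Z - q ^ i))%N.
Proof.
elim: d => [|d IH] hd.
  rewrite big_ord0.
  rewrite (_ : ft Z 0 = setT) ?cardsT ?card_tuple ?expn0 //.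
  apply/setP=> s; rewrite !inE tuple0 /=.
  by rewrite nil_free.
rewrite big_ord_recr /= -IH ?(ltnW hd) //.
pose P := [set p : d.-tuple vT * vT | (p.1 \in ft Z d) && (p.2 \in Vs Z p.1)].
have -> : ft Z d.+1 = (fun p : d.-tuple vT * vT => [tuple of p.2 :: p.1]) @: P.
  apply/setP=> u; apply/idP/imsetP.
    case/tupleP: u => v s; rewrite !inE /= free_cons => /andP[/andP[nv fs] /andP[vZ sZ]].
    exists (s, v) => //; rewrite !inE /=; apply/andP; split; apply/andP; split => //.
  case=> [[s v]]; rewrite !inE /= => /andP[/andP[fs sZ] /andP[vZ nv]] ->.
  by rewrite /= free_cons nv fs /= vZ sZ.
rewrite card_imset; last first.
  by move=> [s v] [s' v'] /= [-> /val_inj ->].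
rewrite -sum1_card.
rewrite (eq_bigl (fun p : d.-tuple vT * vT => (p.1 \in ft Z d) && (p.2 \in Vs Z p.1))); last first.
  by move=> p; rewrite inE.
rewrite -(pair_big_dep (fun s => s \in ft Z d) (fun s v => v \in Vs Z s) (fun _ _ => 1%N)) /=.
rewrite -sum_nat_const; apply: eq_bigr => s sin.
by rewrite sum1_card card_Vs.
Qed.

Definition subs (Z : {vspace vT}) d :=
  [set U : {vspace vT} | (U <= Z)%VS && (\dim U == d)].

Lemma ft_sub Z d : (\dim Z = d) ->
  #|ft Z d| = (\prod_(i < d) (q ^ d - q ^ i))%N.
Proof. by move=> hd; rewrite card_ft hd. Qed.

Lemma card_ft_subs Z d :
  #|ft Z d| = (#|subs Z d| * \prod_(i < d) (q ^ d - q ^ i))%N.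
Proof.
rewrite -sum1_card (partition_big (fun s : d.-tuple vT => <<s>>%VS) (fun U => U \in subs Z d)) /=; last first.
  move=> s; rewrite !inE => /andP[fs /allP sZ].
  apply/andP; split; first by apply/span_subvP.
  by move: fs; rewrite /free size_tuple.
rewrite -sum_nat_const; apply: eq_bigr => U; rewrite inE => /andP[UZ /eqP dU].
rewrite -(ft_sub dU) -sum1_card; apply: eq_bigl => s; rewrite !inE.
apply/idP/idP.
  case/andP=> /andP[fs sZ] /eqP <-; rewrite fs /=; apply/allP => v vs.
  exact: memv_span.
case/andP=> fs /allP sU; rewrite fs /=.
have sub : (<<s>> <= U)%VS by apply/span_subvP.
have ds : \dim <<s>> = d by move: fs; rewrite /free size_tuple => /eqP.
apply/andP; split.
  by apply/allP => v /sU /(subvP UZ).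
by rewrite eqEdim sub dU ds leqnn.
Qed.

Lemma q_gt1 : (1 < q)%N.
Proof. exact: finNzRing_gt1. Qed.

Lemma qpow_sub (z i : nat) : (i <= z)%N ->
  ((q ^ z - q ^ i)%N%:R : rat) = (q ^ i)%:R * ((q ^ (z - i))%:R - 1).
Proof.
move=> hiz; rewrite natrB; last by rewrite leq_exp2l ?q_gt1.
by rewrite mulrBr mulr1 -natrM -expnD subnKC.
Qed.

Lemma qbinomE z d : (d <= z)%N ->
  qbinom q z d = (\prod_(i < d) (q ^ z - q ^ i))%N%:R / (\prod_(i < d) (q ^ d - q ^ i))%N%:R.
Proof.
move=> hdz; rewrite !natr_prod.
rewrite (eq_bigr (fun i : 'I_d => (q ^ i)%:R * ((q ^ (z - i))%:R - 1) : rat)); last first.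
  move=> i _; apply: qpow_sub; apply: leq_trans (ltnW (ltn_ord i)) hdz.
rewrite [X in _ / X](eq_bigr (fun i : 'I_d => (q ^ i)%:R * ((q ^ (d - i))%:R - 1) : rat)); last first.
  move=> i _; apply: qpow_sub; apply: ltnW (ltn_ord i).
rewrite !big_split /=.
have qnz : (\prod_(i < d) ((q ^ i)%:R : rat)) != 0.
  rewrite prodf_seq_neq0; apply/allP => i _ /=; rewrite pnatr_eq0 -lt0n expn_gt0.
  by rewrite (ltn_trans _ q_gt1).
rewrite invfM mulrACA divff // mul1r /qbinom prodf_div; congr (_ / _).
rewrite (reindex_inj rev_ord_inj) /=; apply: eq_bigr => i _.
by rewrite subnSK ?ltn_ord.
Qed.

Lemma qbinom_ge0 a b : 0 <= qbinom q a b.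
Proof.
apply: prodr_ge0 => i _; apply: divr_ge0; rewrite subr_ge0 ler1n expn_gt0;
  by rewrite (ltn_trans _ q_gt1).
Qed.

Lemma card_subs Z d : (d <= \dim Z)%N -> (#|subs Z d|%:R : rat) = qbinom q (\dim Z) d.
Proof.
move=> hd; rewrite qbinomE // -(card_ft hd) card_ft_subs natrM mulfK //.
rewrite pnatr_eq0 -lt0n; apply/prodn_gt0 => i; rewrite subn_gt0 ltn_exp2l ?q_gt1 //.
Qed.

Lemma card_sup Z W d : (W <= Z)%VS -> (\dim W <= d)%N ->
  (#|[set U in subs Z d | (W <= U)%VS]|%:R : rat) <= qbinom q (\dim Z - \dim W) (d - \dim W).
Proof.
move=> WZ Wd.
set C := (Z :\: W)%VS.
have ZW : (Z :&: W)%VS = W by apply/capv_idPr.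
have dC : \dim C = (\dim Z - \dim W)%N.
  by rewrite -(dimv_cap_compl Z W) ZW addKn.
have CW : (C :&: W = 0)%VS by apply: capv_diff.
have CWZ : (C + W)%VS = Z by have := addv_diff_cap Z W; rewrite ZW.
have [hd|hd] := leqP d (\dim Z); last first.
  rewrite (_ : [set U in subs Z d | (W <= U)%VS] = set0) ?cards0 ?qbinom_ge0 //.
  apply/setP=> U; rewrite !inE; apply/negP => /andP[/andP[UZ /eqP dU] _].
  by move: (dimvS UZ); rewrite dU leqNgt hd.
rewrite -dC -card_subs; last by rewrite dC leq_sub2r.
rewrite ler_nat.
rewrite -(@card_in_imset _ _ (fun U => (U :&: C)%VS)).
  apply: subset_leq_card; apply/subsetP => V /imsetP[U]; rewrite !inE.
  case/andP=> /andP[UZ /eqP dU] WU ->; rewrite capvSr /=.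
  have E : (U :&: C + W)%VS = U by rewrite vspace_modr // CWZ; apply/capv_idPl.
  have := dimv_sum_cap (U :&: C) W.
  rewrite E (_ : (U :&: C :&: W)%VS = 0%VS) ?dimv0 ?addn0 => [H|].
    by rewrite -dU H addnK.
  by apply/eqP; rewrite -subv0 -CW capvS ?capvSr.
move=> U1 U2; rewrite !inE => /andP[/andP[U1Z _] WU1] /andP[/andP[U2Z _] WU2] E.
have E1 : (U1 :&: C + W)%VS = U1 by rewrite vspace_modr // CWZ; apply/capv_idPl.
have E2 : (U2 :&: C + W)%VS = U2 by rewrite vspace_modr // CWZ; apply/capv_idPl.
by rewrite -E1 -E2 E.
Qed.
End Count.


Section Lin.
Variables (F : fieldType) (vT : vectType F).

Lemma add_line_dim (W : {vspace vT}) z : z \notin W ->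
  \dim (W + <[z]>)%VS = (\dim W).+1.
Proof.
move=> zW; rewrite dimv_disjoint_sum ?dim_vline; last first.
  apply/eqP; rewrite -subv0; apply/subvP => y /memv_capP[yW /vlineP[k yk]].
  rewrite memv0; apply/eqP; move: yW; rewrite yk.
  have [->|k0] := eqVneq k 0; first by rewrite scale0r.
  by move/(memvZ k^-1); rewrite scalerA mulVf // scale1r (negbTE zW).
have -> : (z != 0) by apply: contraNneq zW => ->; rewrite mem0v.
by rewrite addn1.
Qed.

Lemma mid_space (W Z : {vspace vT}) d : (W <= Z)%VS -> (\dim W <= d)%N -> (d <= \dim Z)%N ->
  exists U : {vspace vT}, [/\ (W <= U)%VS, (U <= Z)%VS & \dim U = d].
Proof.
move=> WZ; move: {2}(d - \dim W)%N (erefl (d - \dim W)%N) => r.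
elim: r W WZ => [|r IH] W WZ hr Wd dZ.
  by exists W; split => //; apply/eqP; rewrite eqn_leq Wd -subn_eq0 hr.
have Wlt : (\dim W < \dim Z)%N.
  by apply: leq_trans dZ; rewrite -subn_gt0 hr.
have : ~~ (Z <= W)%VS.
  by apply: contraTN Wlt => /dimvS; rewrite leqNgt.
case/subvPn => z zZ zW.
have [U [h1 h2 h3]] : exists U : {vspace vT}, [/\ (W + <[z]> <= U)%VS, (U <= Z)%VS & \dim U = d].
  apply: IH; rewrite ?add_line_dim //.
  - by rewrite subv_add WZ -memvE.
  - by rewrite subnS hr.
  - by rewrite -subn_gt0 hr.
exists U; split => //; apply: subv_trans h1; exact: addvSl.
Qed.
End Lin.

Section Aff.
Variables (F : finFieldType) (n : nat).
Local Notation V := 'rV[F]_(1 + n).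

Definition ee (a : 'rV[F]_n) : V := row_mx 1%:M a.
Definition emb (a : 'rV[F]_n) : V := row_mx 0 a.
Definition Hinf : {vspace V} := lker (linfun (@lsubmx F 1 1 n)).
Definition hat (A : {set 'rV[F]_n}) : {vspace V} := <<[seq ee a | a <- enum A]>>%VS.
Definition aff (U : {vspace V}) : {set 'rV[F]_n} := [set a | ee a \in U].

Lemma memH u : (u \in Hinf) = (lsubmx u == 0).
Proof. by rewrite memv_ker lfunE. Qed.

Lemma ee_notH a : ee a \notin Hinf.
Proof.
rewrite memH /ee row_mxKl; apply/eqP => /matrixP /(_ 0 0).
by rewrite !mxE /= => /eqP; rewrite oner_eq0.
Qed.

Lemma emb_H a : emb a \in Hinf.
Proof. by rewrite memH /emb row_mxKl. Qed.

Lemma eeB a b : ee a - ee b = emb (a - b).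
Proof. by rewrite /ee /emb opp_row_mx add_row_mx subrr. Qed.

Lemma mem_hat (A : {set 'rV[F]_n}) a : a \in A -> ee a \in hat A.
Proof. by move=> aA; apply: memv_span; apply: map_f; rewrite mem_enum. Qed.

Lemma hat_subP (A : {set 'rV[F]_n}) (Y : {vspace V}) : reflect {in A, forall a, ee a \in Y} (hat A <= Y)%VS.
Proof.
apply: (iffP span_subvP) => [h a aA | h y /mapP[a]]; first by apply: h; rewrite map_f ?mem_enum.
by rewrite mem_enum => aA ->; apply: h.
Qed.

Lemma affS (U U' : {vspace V}) : (U <= U')%VS -> aff U \subset aff U'.
Proof. by move=> h; apply/subsetP => a; rewrite !inE => /(subvP h). Qed.

Lemma dim_lsub (U : {vspace V}) : ~~ (U <= Hinf)%VS ->
  \dim (U :&: Hinf)%VS = (\dim U).-1.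
Proof.
case/subvPn => u uU uH.
have := limg_ker_dim (linfun (@lsubmx F 1 1 n)) U.
have -> : \dim (linfun (@lsubmx F 1 1 n) @: U)%VS = 1%N.
  apply/eqP; rewrite eqn_leq; apply/andP; split.
    by apply: leq_trans (dimvS (subvf _)) _; rewrite dimvf /dim /= muln1.
  have : (lsubmx u) \in (linfun (@lsubmx F 1 1 n) @: U)%VS.
    by rewrite -lfunE memv_img.
  rewrite memvE => /dimvS; apply: leq_trans; rewrite dim_vline.
  by rewrite lt0b -memH.
by rewrite addn1 => <-.
Qed.

Lemma emb_inj : injective emb.
Proof. by move=> a b /(congr1 rsubmx); rewrite /emb !row_mxKr. Qed.

Lemma H_emb y : y \in Hinf -> y = emb (rsubmx y).
Proof. by rewrite memH /emb => /eqP <-; rewrite hsubmxK. Qed.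

Definition Lemb : 'Hom('rV[F]_n, V) := linfun (mulmxr (row_mx 0 1%:M)).
Lemma LembE x : Lemb x = emb x.
Proof. by rewrite lfunE /= mul_mx_row mulmx0 mulmx1. Qed.

Lemma dim_emb (W : {vspace 'rV[F]_n}) :
  \dim (Lemb @: W)%VS = \dim W.
Proof.
apply: limg_dim_eq; apply/eqP; rewrite -subv0; apply/subvP => y /memv_capP[_].
by rewrite memv_ker LembE memv0 /= => /eqP; rewrite -row_mx0 => /eq_row_mx[_ ->].
Qed.

Lemma aff_affine d (U : {vspace V}) : ~~ (U <= Hinf)%VS -> \dim U = d.+1 ->
  affine_space d (aff U).
Proof.
move=> UH dU.
have [u uU uH] := subvPn UH.
have lu0 : lsubmx u != 0 by rewrite -memH.
set c := lsubmx u 0 0.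
have c0 : c != 0.
  apply: contra lu0 => /eqP c0; apply/eqP/matrixP => i j.
  by rewrite !ord1 -/c c0 mxE.
set u' := c^-1 *: u.
have u'U : u' \in U by rewrite memvZ.
have lu' : lsubmx u' = 1%:M.
  by apply/matrixP => i j; rewrite !ord1 linearZ /= mxE -/c mulVf // mxE.
set v := rsubmx u'.
have ev : ee v = u' by rewrite /ee -lu' hsubmxK.
exists v, (linfun (@rsubmx F 1 1 n) @: (U :&: Hinf))%VS; split.
  rewrite limg_dim_eq; first by rewrite dim_lsub // dU.
  apply/eqP; rewrite -subv0; apply/subvP => y /memv_capP[/memv_capP[_ yH]].
  by rewrite memv_ker lfunE memv0 /= => /eqP r0; rewrite (H_emb yH) r0 /emb row_mx0.
apply/setP => x; rewrite !inE.
have -> : ee x = u' + emb (x - v) by rewrite -eeB ev addrC subrK.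
rewrite (rpredDl _ u'U).
apply/idP/memv_imgP => [h | [y /memv_capP[yU yH]]].
  exists (emb (x - v)); first by rewrite memv_cap h emb_H.
  by rewrite lfunE /emb /= row_mxKr.
rewrite lfunE /= => ->; rewrite -H_emb //.
Qed.

Lemma hat_affine k (A : {set 'rV[F]_n}) : affine_space k A ->
  \dim (hat A) = k.+1 /\ aff (hat A) = A.
Proof.
case=> v [W [dW ->]].
set E := (Lemb @: W)%VS.
have EH : (E <= Hinf)%VS.
  by apply/subvP => y /memv_imgP[w _ ->]; rewrite LembE emb_H.
have vA : v \in [set x | x - v \in W] by rewrite inE subrr mem0v.
have -> : hat [set x | x - v \in W] = (E + <[ee v]>)%VS.
  apply/eqP; rewrite eqEsubv; apply/andP; split.
    apply/hat_subP => a; rewrite inE => aW.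
    rewrite -(subrK (ee v) (ee a)) eeB; apply: memv_add; last exact: memv_line.
    by rewrite -LembE memv_img.
  rewrite subv_add -memvE mem_hat // andbT.
  apply/subvP => y /memv_imgP[w wW ->]; rewrite LembE /emb /=.
  have -> : row_mx 0 w = ee (w + v) - ee v :> V by rewrite eeB addrK.
  by apply: memvB; apply: mem_hat => //; rewrite inE addrK.
split.
  rewrite add_line_dim ?dim_emb ?dW //.
  by apply: contra (ee_notH v) => /(subvP EH).
apply/setP => x; rewrite !inE; apply/idP/idP => [/memv_addP[y /memv_imgP[w wW ->] [z /vlineP[c ->] h]] | xW].
  rewrite LembE /= in h.
  have h1 := congr1 lsubmx h; have h2 := congr1 rsubmx h.
  rewrite /ee linearD linearZ /= !row_mxKl in h1.
  rewrite /ee linearD linearZ /= !row_mxKr in h2.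
  have c1 : c = 1.
    move/matrixP: h1 => /(_ 0 0); rewrite !mxE /= add0r mulr1 => /eqP.
    by rewrite eq_sym => /eqP.
  by rewrite h2 c1 scale1r addrK.
rewrite -(subrK (ee v) (ee x)) eeB; apply: memv_add; last exact: memv_line.
by rewrite -LembE memv_img.
Qed.

Lemma affine_nonempty k (A : {set 'rV[F]_n}) : affine_space k A -> exists a, a \in A.
Proof. by case=> v [W [_ ->]]; exists v; rewrite inE subrr mem0v. Qed.

Lemma meets_hat t (A B : {set 'rV[F]_n}) : meets_in t A B ->
  exists C : {vspace V}, [/\ (C <= hat A)%VS, (C <= hat B)%VS, \dim C = t.+1 & ~~ (C <= Hinf)%VS].
Proof.
case=> C0 [aC0 [C0A C0B]].
have [dC affC] := hat_affine aC0.
have [c cC] := affine_nonempty aC0.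
exists (hat C0); split => //.
- by apply/hat_subP => a aC; apply: mem_hat; apply: (subsetP C0A).
- by apply/hat_subP => a aC; apply: mem_hat; apply: (subsetP C0B).
- by apply/subvPn; exists (ee c); [apply: mem_hat | apply: ee_notH].
Qed.

Lemma hat_meets t k (Y sg : {vspace V}) (A : {set 'rV[F]_n}) : affine_space k A ->
  (Y <= sg)%VS -> (Y <= hat A)%VS -> (t.+1 <= \dim Y)%N -> ~~ (Y <= Hinf)%VS ->
  meets_in t (aff sg) A.
Proof.
move=> aA Ysg YA dY YH.
have [y yY yH] := subvPn YH.
have y0 : y != 0 by apply: contraNneq yH => ->; rewrite mem0v.
have [U [yU UY dU]] : exists U : {vspace V}, [/\ (<[y]> <= U)%VS, (U <= Y)%VS & \dim U = t.+1].
  by apply: mid_space => //; rewrite ?dim_vline ?y0 // -memvE.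
have UH : ~~ (U <= Hinf)%VS.
  by apply/subvPn; exists y => //; rewrite memvE.
exists (aff U); split; first exact: aff_affine.
split; first by apply: affS; apply: subv_trans Ysg.
have [_ <-] := hat_affine aA.
by apply: affS; apply: subv_trans YA.
Qed.
End Aff.


Section QB.
Variable q : nat.
Hypothesis q1 : (1 < q)%N.

Lemma qpos i : (1 <= (q ^ i)%:R :> rat).
Proof. by rewrite ler1n expn_gt0 (ltn_trans _ q1). Qed.

Lemma qpos1 i : (0 < (q ^ i.+1)%:R - 1 :> rat).
Proof. by rewrite subr_gt0 ltr1n -(expn0 q) ltn_exp2l. Qed.

Lemma qb_ge0 a b : 0 <= qbinom q a b.
Proof.
by apply: prodr_ge0 => i _; apply: divr_ge0; rewrite subr_ge0 ?qpos.
Qed.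

Lemma theta_ge1 c : 1 <= theta q c.
Proof.
rewrite /theta ler_pdivlMr; last by have := qpos1 0; rewrite expn1.
by rewrite mul1r lerB // ler_nat expnS leq_pmulr // expn_gt0 (ltn_trans _ q1).
Qed.

Lemma theta_ge0 c : 0 <= theta q c.
Proof. exact: le_trans (theta_ge1 c). Qed.

Lemma qb_recr m j : qbinom q m j.+1 =
  qbinom q m j * (((q ^ (m - j))%:R - 1) / ((q ^ j.+1)%:R - 1)).
Proof. by rewrite /qbinom big_ord_recr. Qed.

Lemma qb_recl m j : qbinom q m.+1 j.+1 =
  ((q ^ m.+1)%:R - 1) / ((q ^ j.+1)%:R - 1) * qbinom q m j.
Proof.
rewrite /qbinom !prodf_div big_ord_recl big_ord_recr /= subn0.
rewrite mulf_div [X in _ / X]mulrC; by congr (_ * _ / _).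
Qed.

Lemma qb_diag m : qbinom q m m = 1.
Proof.
elim: m => [|m IH]; first by rewrite /qbinom big_ord0.
by rewrite qb_recl IH mulr1 divff // gt_eqF // qpos1.
Qed.

Lemma qb_absorb m i : (i <= m)%N ->
  qbinom q m.+1 i = ((q ^ m.+1)%:R - 1) / ((q ^ (m.+1 - i))%:R - 1) * qbinom q m i.
Proof.
case: i => [|i] hi; first by rewrite /qbinom !big_ord0 subn0 divff ?mulr1 // gt_eqF // qpos1.
rewrite qb_recl qb_recr.
have h1 := qpos1 i; have h2 : 0 < (q ^ (m - i))%:R - 1 :> rat.
  by rewrite -(subnSK hi) qpos1.
rewrite subSS; field.
by rewrite !gt_eqF.
Qed.

Lemma qb_sym m j : (j <= m)%N -> qbinom q m j = qbinom q m (m - j).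
Proof.
elim: m j => [|m IH] j hj.
  by move: hj; rewrite leqn0 => /eqP ->.
case: j hj => [|j] hj.
  by rewrite subn0 qb_diag /qbinom big_ord0.
rewrite subSS [RHS]qb_absorb ?leq_subr // -IH // qb_recl.
by rewrite subSn ?leq_subr // subKn.
Qed.

Lemma qb_pascal m j : (j <= m)%N ->
  qbinom q m.+1 j.+1 - qbinom q m j.+1 = (q ^ (m - j))%:R * qbinom q m j.
Proof.
move=> hj; rewrite qb_recl qb_recr.
have h1 := qpos1 j.
have E : (q ^ m.+1)%:R = (q ^ (m - j))%:R * (q ^ j.+1)%:R :> rat.
  by rewrite -natrM -expnD addnS subnK.
rewrite E; field; by rewrite gt_eqF.
Qed.

Lemma cross c i : (((q ^ (c + i).+1)%:R - 1) / ((q ^ i.+1)%:R - 1) : rat) <= theta q c.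
Proof.
rewrite /theta.
have h1 := qpos1 i; have h0 := qpos1 0; rewrite expn1 in h0.
rewrite ler_pdivrMr // mulrAC ler_pdivlMr //.
have ea : (q ^ (c + i).+1)%:R = (q ^ c)%:R * (q ^ i)%:R * q%:R :> rat.
  by rewrite -!natrM -expnD expnSr.
have eb : (q ^ c.+1)%:R = (q ^ c)%:R * q%:R :> rat by rewrite -natrM expnSr.
have ec : (q ^ i.+1)%:R = (q ^ i)%:R * q%:R :> rat by rewrite -natrM expnSr.
rewrite ea eb ec.
have a1 := qpos c; have b1 := qpos i.
have Q0 : (0 : rat) <= q%:R by rewrite ler0n.
set A := (q ^ c)%:R in a1 *; set B := (q ^ i)%:R in b1 *; set Q := (q%:R : rat) in Q0 *.
have : 0 <= Q * ((A - 1) * (B - 1)) by apply: mulr_ge0 => //; apply: mulr_ge0; lra.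
nra.
Qed.

Lemma qb_theta_pow c a g : (a <= c + g)%N -> qbinom q a g <= theta q c ^+ g.
Proof.
elim: g a => [|g IH] a ha; first by rewrite /qbinom big_ord0 expr0.
case: a ha => [|a] ha.
  rewrite /qbinom big_ord_recl /= subn0 expn0 subrr mul0r mul0r.
  by apply: exprn_ge0; apply: theta_ge0.
rewrite qb_recl exprS; apply: ler_pM.
- by apply: divr_ge0; rewrite subr_ge0 qpos.
- exact: qb_ge0.
- apply: le_trans (cross c g); rewrite ler_pM2r ?invr_gt0 ?qpos1 //.
  by rewrite lerB // ler_nat leq_exp2l // -addnS.
- by apply: IH; rewrite -ltnS -addnS.
Qed.

Lemma qb_step c a b : (c.+1 + b <= a)%N ->
  theta q c * qbinom q a b <= qbinom q a.+1 b.+1.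
Proof.
move=> h; rewrite qb_recl; apply: ler_wpM2r; first exact: qb_ge0.
rewrite /theta.
have h1 := qpos1 b; have h0 := qpos1 0; rewrite expn1 in h0.
rewrite ler_pdivrMr // mulrAC ler_pdivlMr //.
have ea : (q ^ c.+1)%:R * (q ^ b.+1)%:R <= (q ^ a.+1)%:R :> rat.
  by rewrite -natrM -expnD ler_nat leq_exp2l // addnS.
have eb : (q ^ b.+1)%:R = (q ^ b)%:R * q%:R :> rat by rewrite -natrM expnSr.
have ec : (q ^ c.+1)%:R = (q ^ c)%:R * q%:R :> rat by rewrite -natrM expnSr.
have Q2 : (2 : rat) <= q%:R by rewrite ler_nat.
have a1 := qpos c; have b1 := qpos b.
move: ea; rewrite eb ec.
set R := (q ^ a.+1)%:R.
set A := (q ^ c)%:R in a1 *; set B := (q ^ b)%:R in b1 *; set Q := (q%:R : rat) in Q2 *.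
move=> ea.
have X1 : 1 <= A * Q by nra.
have Y1 : 1 <= B * Q by nra.
have h3 : 0 <= (R - A * Q * (B * Q)) * (Q - 1) by apply: mulr_ge0; lra.
have h4 : 0 <= (A * Q * (B * Q) - 1) * (Q - 2) by apply: mulr_ge0; nra.
set X := A * Q in X1 h3 h4 *; set Y := B * Q in Y1 h3 h4 *.
nra.
Qed.

Lemma qb_steps c a b e : (c.+1 + b <= a)%N ->
  theta q c ^+ e * qbinom q a b <= qbinom q (a + e) (b + e).
Proof.
move=> h; elim: e => [|e IH]; first by rewrite expr0 mul1r !addn0.
rewrite exprS -mulrA !addnS; apply: le_trans (qb_step (c := c) _); last first.
  by rewrite addnA leq_add2r.
by rewrite ler_wpM2l // theta_ge0.
Qed.
End QB.


Lemma card_bigcup_le (I T : finType) (P : pred I) (f : I -> {set T}) :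
  (#|\bigcup_(i | P i) f i| <= \sum_(i | P i) #|f i|)%N.
Proof.
apply: (big_ind2 (fun (X : {set T}) (m : nat) => #|X| <= m)%N) => //.
- by rewrite cards0.
- move=> X1 m1 X2 m2 h1 h2; rewrite cardsU; apply: leq_trans (leq_subr _ _) _.
  exact: leq_add.
Qed.

Section Main.
Variables (F : finFieldType) (n k t x : nat) (S : {set {set 'rV[F]_n}}).
Hypotheses (hk : (t.+1 < k)%N) (hn : (2 * k - t < n)%N)
  (hmax : maximal_t_intersecting k t S)
  (hnc : forall (d : nat) (T : {set 'rV[F]_n}), (d < t + x)%N ->
      affine_space d T -> ~ covers t T S).
Local Notation q := #|F|.
Local Notation V := 'rV[F]_(1 + n).

Definition Sig (sg : {vspace V}) := [set A in S | (sg <= hat A)%VS].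
Definition NN := qbinom q (n - t - x) (k - t - x).
Definition G s : rat := if (k < s)%N then 0 else
  if (s <= t + x)%N then theta q (k - t) ^+ (t + x - s) * NN else qbinom q (n - s) (k - s).

Lemma q1 : (1 < q)%N. Proof. exact: finNzRing_gt1. Qed.

Lemma G_ge0 s : 0 <= G s.
Proof.
rewrite /G; case: ifP => // _; case: ifP => _; last exact: (qb_ge0 q1).
apply: mulr_ge0; last exact: (qb_ge0 q1).
by apply: exprn_ge0; exact: (theta_ge0 q1).
Qed.

Lemma S_aff A : A \in S -> affine_space k A.
Proof. by case: hmax => [[h _] _]; apply: h. Qed.

Lemma S_meet A B : A \in S -> B \in S -> A != B -> meets_in t A B.
Proof. by case: hmax => [[_ h] _]; apply: h. Qed.

Lemma hat_inj : {in S &, injective (@hat F n)}.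
Proof.
move=> A B AS BS e.
have [_ <-] := hat_affine (S_aff AS); have [_ <-] := hat_affine (S_aff BS).
by rewrite e.
Qed.

Lemma Sig_base sg s : \dim sg = s.+1 ->
  (#|Sig sg|%:R : rat) <= if (k < s)%N then 0 else qbinom q (n - s) (k - s).
Proof.
move=> dsg; case: ifP => hks.
  rewrite (_ : Sig sg = set0) ?cards0 //.
  apply/setP => A; rewrite !inE; apply/negP => /andP[AS /dimvS].
  have [-> _] := hat_affine (S_aff AS).
  by rewrite dsg ltnS leqNgt hks.
have := @card_sup F (1 + n) fullv sg k.+1 (subvf _).
rewrite dsg ltnS leqNgt hks => /(_ isT).
rewrite dimvf /dim /= mul1n subSS (_ : (1 + n - s.+1 = n - s)%N); last by rewrite add1n subSS.
apply: le_trans; rewrite ler_nat.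
rewrite -(@card_in_imset _ _ (@hat F n) (Sig sg)); last first.
  by move=> A B; rewrite !inE => /andP[AS _] /andP[BS _]; apply: hat_inj.
apply: subset_leq_card; apply/subsetP => U /imsetP[A]; rewrite !inE.
case/andP=> AS sgA ->; rewrite subvf sgA /=.
by have [-> _] := hat_affine (S_aff AS); rewrite eqxx.
Qed.

Lemma G_step s g : (s < t + x)%N -> (s <= k)%N -> (0 < g)%N ->
  theta q (k - t) ^+ g * G (s + g) <= G s.
Proof.
move=> h1 h2 h3.
have th0 : 0 <= theta q (k - t) by exact: (theta_ge0 q1).
have -> : G s = theta q (k - t) ^+ (t + x - s) * NN.
  by rewrite /G ltnNge h2 /= ltnW.
rewrite /G; case: (ltnP k (s + g)) => h4.
  by rewrite mulr0; apply: mulr_ge0; [apply: exprn_ge0 | exact: (qb_ge0 q1)].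
case: (leqP (s + g) (t + x)) => h5.
  by rewrite mulrA -exprD (_ : (g + (t + x - (s + g)) = t + x - s)%N) //; lia.
set e := (s + g - (t + x))%N.
have ge : (g = t + x - s + e)%N by rewrite /e; lia.
rewrite {1}ge exprD -mulrA; apply: ler_wpM2l; first by apply: exprn_ge0.
have := @qb_steps _ q1 (k - t)%N (n - (s + g))%N (k - (s + g))%N e.
have -> : (n - (s + g) + e = n - t - x)%N by rewrite /e; lia.
have -> : (k - (s + g) + e = k - t - x)%N by rewrite /e; lia.
apply; lia.
Qed.

Lemma Sig_step s (sg : {vspace V}) : (s < t + x)%N -> (t <= s)%N -> \dim sg = s.+1 ->
  ~~ (sg <= Hinf F n)%VS ->
  (forall s' (sg' : {vspace V}), (s < s')%N -> (t <= s')%N -> \dim sg' = s'.+1 ->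
      ~~ (sg' <= Hinf F n)%VS -> (#|Sig sg'|%:R : rat) <= G s') ->
  (#|Sig sg|%:R : rat) <= G s.
Proof.
move=> hs hts dsg sgH IH.
case: (ltnP k s) => hks.
  by apply: le_trans (Sig_base dsg) _; rewrite hks /G hks.
have aff_sg := aff_affine sgH dsg.
have [A AS nA] : exists2 A, A \in S & ~ meets_in t (aff sg) A.
  case: (classic (exists2 A, A \in S & ~ meets_in t (aff sg) A)) => // h.
  exfalso; apply: (hnc hs aff_sg) => A AS; apply: NNPP => nm; apply: h; by exists A.
have [dA affA] := hat_affine (S_aff AS).
set hA := hat A in dA affA.
set W := (sg :&: hA)%VS.
set w := \dim W.
have Wsg : (W <= sg)%VS by apply: capvSl.
have WA : (W <= hA)%VS by apply: capvSr.
have fact1 : (t.+1 <= w)%N -> (W <= Hinf F n)%VS.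
  move=> hw; apply/negPn/negP => WH; apply: nA.
  exact: (hat_meets (S_aff AS) Wsg WA hw WH).
have wd : (w <= s.+1)%N by rewrite -dsg; apply: dimvS.
set d := (maxn t w).+1.
set g := (d - w)%N.
have g0 : (0 < g)%N by rewrite /g /d; lia.
set Us := [set U in subs hA d | (W <= U)%VS].
have cover : Sig sg \subset \bigcup_(U in Us) Sig (sg + U)%VS.
  apply/subsetP => B; rewrite inE => /andP[BS sgB].
  have AB : A != B.
    apply/eqP => eAB; move: sgB; rewrite -eAB -/hA => sgA.
    have eW : W = sg by apply/capv_idPl.
    have := fact1; rewrite /w eW dsg ltnS => /(_ hts); by apply/negP.
  have [C [CA CB dC CH]] := meets_hat (S_meet AS BS AB).
  set Z := (W + C)%VS.
  have WZ : (W <= Z)%VS by apply: addvSl.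
  have ZA : (Z <= hA)%VS by rewrite subv_add WA.
  have ZB : (Z <= hat B)%VS by rewrite subv_add CB (subv_trans Wsg sgB).
  have dZ : (d <= \dim Z)%N.
    case: (leqP w t) => hwt.
      rewrite /d (maxn_idPl hwt) -dC; apply: dimvS; exact: addvSr.
    have WH := fact1 hwt.
    have [c cC cH] := subvPn CH.
    have cW : c \notin W by apply: contra cH => /(subvP WH).
    rewrite /d (maxn_idPr (ltnW hwt)) -(add_line_dim cW); apply: dimvS.
    by rewrite subv_add WZ -memvE (subvP (addvSr W C)).
  have [U [WU UZ dU]] := mid_space WZ (leqW (leq_maxr t w)) dZ.
  apply/bigcupP; exists U.
    by rewrite !inE dU eqxx WU (subv_trans UZ ZA).
  by rewrite inE BS subv_add sgB (subv_trans UZ ZB).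
have hsum := card_bigcup_le (fun U => U \in Us) (fun U => Sig (sg + U)%VS).
apply: le_trans (_ : (\sum_(U in Us) (#|Sig (sg + U)%VS|%:R : rat)) <= _).
  rewrite -natr_sum ler_nat; apply: leq_trans hsum; exact: subset_leq_card.
apply: le_trans (_ : (\sum_(U in Us) G (s + g)) <= _).
  apply: ler_sum => U; rewrite !inE => /andP[/andP[UA /eqP dU] WU].
  have capU : (sg :&: U)%VS = W.
    apply/eqP; rewrite eqEsubv; apply/andP; split.
      by apply: capvS => //; apply: subvv.
    by rewrite subv_cap Wsg WU.
  have dsU : \dim (sg + U)%VS = (s + g).+1.
    have := dimv_sum_cap sg U; rewrite capU dsg dU -/w.
    rewrite /g /d; lia.
  apply: IH => //.
  - by rewrite -{1}(addn0 s) ltn_add2l.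
  - exact: leq_trans hts (leq_addr _ _).
  - by apply: contra sgH; apply: subv_trans (addvSl _ _).
rewrite sumr_const -mulr_natl.
apply: le_trans (_ : theta q (k - t) ^+ g * G (s + g) <= _); last exact: G_step.
apply: ler_wpM2r; first exact: G_ge0.
apply: le_trans (card_sup WA (leq_trans (leqnSn w) (leq_maxr t w : (w.+1 <= d)%N))) _.
rewrite dA; apply: (@qb_theta_pow _ q1 (k - t)%N).
rewrite /g /d; lia.
Qed.

Lemma Sig_bound m : forall s (sg : {vspace V}), (t + x - s <= m)%N -> (t <= s)%N ->
  \dim sg = s.+1 -> ~~ (sg <= Hinf F n)%VS -> (#|Sig sg|%:R : rat) <= G s.
Proof.
elim: m => [|m IH] s sg hm hts dsg sgH.
  have hs : (t + x <= s)%N by rewrite -subn_eq0 -leqn0.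
  apply: le_trans (Sig_base dsg) _; rewrite /G; case: ifP => // hks.
  case: ifP => hs2 //; have es : s = (t + x)%N by apply/eqP; rewrite eqn_leq hs2 hs.
  by rewrite es subnn expr0 mul1r /NN !subnDA.
case: (leqP (t + x) s) => hs.
  apply: le_trans (Sig_base dsg) _; rewrite /G; case: ifP => // hks.
  case: ifP => hs2 //; have es : s = (t + x)%N by apply/eqP; rewrite eqn_leq hs2 hs.
  by rewrite es subnn expr0 mul1r /NN !subnDA.
apply: Sig_step => // s' sg' hss' hts' dsg' sgH'.
apply: IH => //; lia.
Qed.
End Main.

Unset Implicit Arguments.

Theorem mainTheorem13 (F : finFieldType) (n k t x : nat)
  (S : {set {set 'rV[F]_n}}) :
  (t.+1 < k)%N -> (2 * k - t < n)%N ->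
  maximal_t_intersecting k t S ->
  (* psi(S) = t + x : some affine (t+x)-space works, no smaller one does *)
  (exists T : {set 'rV[F]_n}, affine_space (t + x) T /\ covers t T S) ->
  (forall (d : nat) (T : {set 'rV[F]_n}), (d < t + x)%N ->
      affine_space d T -> ~ covers t T S) ->
  (2 <= x)%N ->
  (#|S|%:R : rat) <=
    (#|F| ^ x)%:R * qbinom #|F| (t + x) x * theta #|F| (k - t) ^+ x
      * qbinom #|F| (n - t - x) (k - t - x).
Proof.
move=> hk hn hmax [T [aT covT]] hnc hx.
have q1 : (1 < #|F|)%N by exact: finNzRing_gt1.
have [dT affT] := hat_affine aT.
set hT := hat T in dT affT.
have TH : ~~ (hT <= Hinf F n)%VS.
  have [v vT] := affine_nonempty aT.
  by apply/subvPn; exists (ee v); [apply: mem_hat | apply: ee_notH].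
set Ts := [set U in subs hT t.+1 | ~~ (U <= Hinf F n)%VS].
have cover : S \subset \bigcup_(U in Ts) Sig S U.
  apply/subsetP => A AS.
  have [C [CT CA dC CH]] := meets_hat (covT A AS).
  apply/bigcupP; exists C; first by rewrite !inE CT dC eqxx CH.
  by rewrite inE AS CA.
have GT : G F n k t x t = theta #|F| (k - t) ^+ x * NN F n k t x.
  by rewrite /G ltnNge (ltnW (ltnW hk)) leq_addr addKn.
apply: le_trans (_ : (\sum_(U in Ts) (#|Sig S U|%:R : rat)) <= _).
  rewrite -natr_sum ler_nat; apply: leq_trans (card_bigcup_le _ _).
  exact: subset_leq_card.
apply: le_trans (_ : (\sum_(U in Ts) G F n k t x t) <= _).
  apply: ler_sum => U; rewrite !inE => /andP[/andP[UT /eqP dU] UH].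
  apply: (@Sig_bound F n k t x S hk hn hmax hnc x) => //; rewrite ?addKn //.
rewrite sumr_const GT -(mulr_natl (theta #|F| (k - t) ^+ x * NN F n k t x) #|Ts|).
have eR : (#|F| ^ x)%:R * qbinom #|F| (t + x) x * theta #|F| (k - t) ^+ x * qbinom #|F| (n - t - x) (k - t - x) = (#|F| ^ x)%:R * qbinom #|F| (t + x) x * (theta #|F| (k - t) ^+ x * NN F n k t x) by rewrite /NN !mulrA.
rewrite eR.
apply: ler_wpM2r.
  apply: mulr_ge0; [apply: exprn_ge0; exact: (theta_ge0 q1) | exact: (qb_ge0 q1)].
have eTs : Ts = subs hT t.+1 :\: subs (hT :&: Hinf F n)%VS t.+1.
  apply/setP => U; rewrite !inE subv_cap.
  by case: (U <= hT)%VS; case: (U <= Hinf F n)%VS; case: (\dim U == t.+1).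
have sub2 : subs (hT :&: Hinf F n)%VS t.+1 \subset subs hT t.+1.
  apply/subsetP => U; rewrite !inE subv_cap => /andP[/andP[UT _] dU]; by rewrite UT dU.
rewrite eTs cardsD (setIidPr sub2) natrB ?subset_leq_card //.
have dTH : \dim (hT :&: Hinf F n)%VS = (t + x)%N by rewrite dim_lsub // dT.
rewrite !card_subs ?dT ?dTH; try lia.
by rewrite (qb_pascal q1 (leq_addr x t)) addKn (qb_sym q1 (leq_addr x t)) addKn.
Qed.
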